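(* Let $T$ be a threshold graph with clique number $d$, clique vector $\mathfrak{c}(T)=(c_1,\ldots,c_d)$ and $b$-vector $\mathfrak{b}(T)=(b_1,\ldots,b_d)$. Then \[ \sum_{i=1}^d b_i(x+1)^{i-1}=\sum_{i=1}^d c_i x^{i-1}. \]
   Context: For a graph $G$, $S(G)$ denotes the graph obtained from $G$ by adding a new vertex adjacent to all vertices of $G$, and $D(G)$ the graph obtained by adding a new isolated vertex. For a word $w=w_1\cdots w_n$ over $\{S,D\}$ with $w_n=S$, the threshold graph with word $w$ is $w_1(w_2(\cdots w_n(\emptyset)\cdots))$, $\emptyset$ being the graph with no vertices; every threshold graph arises from exactly one such word. The clique number $d$ of a threshold graph equals the number of letters $S$ in its word. The $b$-vector of a threshold graph $T$ with word $w$ is defined as follows: insert a separator right after every occurrence of $S$ in $w$, thereby cutting $w$ into $d$ consecutive subwords (read left to right), each ending with $S$; $b_i$ is the length of the $i$-th subword. (Example: $w=DDDSSDSDDS$ splits as $DDDS/S/DS/DDS$, giving $\mathfrak{b}=(4,1,2,3)$.) The clique vector $\mathfrak{c}(G)=(c_1,\ldots,c_d)$ of a graph $G$ records the number $c_i$ of cliques with exactly $i$ vertices, $d$ being the clique number. *)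

(* Defs.v *)
From HB Require Import structures.
From mathcomp Require Import all_boot all_order all_algebra.
Set Implicit Arguments. Unset Strict Implicit. Unset Printing Implicit Defensive.
Import GRing.Theory.

(* Words over {S,D} are encoded as seq bool: true = S, false = D.
   The word w = w_1 ... w_n is the list [:: w_1; ...; w_n]. *)

(* The threshold graph with word w: vertex k : 'I_(size w) is the vertex
   created by the letter w_(k+1).  Since w_1 is applied last, a vertex k is
   created after all vertices with larger index, and is adjacent to all of
   them iff its letter is S. *)
Definition threshold_rel (w : seq bool) : rel 'I_(size w) :=
  fun i j => (i != j) && nth false w (minn i j).

Definition clique_count (T : finType) (e : rel T) (k : nat) : nat :=
  #|[set A : {set T} | (#|A| == k) &&
      [forall x in A, forall y in A, (x != y) ==> e x y]]|.

(* b-vector: cut the word right after every S; record the lengths of the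
   pieces, left to right.  acc = length of the current (unfinished) piece. *)
Fixpoint bvec_aux (acc : nat) (w : seq bool) : seq nat :=
  match w with
  | [::] => [::]
  | true :: w' => acc.+1 :: bvec_aux 0 w'
  | false :: w' => bvec_aux acc.+1 w'
  end.

Definition bvec (w : seq bool) : seq nat := bvec_aux 0 w.

(* Clique number of the threshold graph = number of letters S. *)
Definition nS (w : seq bool) : nat := count id w.

Example bvec_example :
  bvec [:: false; false; false; true; true; false; true; false; false; true]
  = [:: 4; 1; 2; 3].
Proof. reflexivity. Qed.

(* Main.v *)
Require Import Defs.
From HB Require Import structures.
From mathcomp Require Import all_boot all_order all_algebra.
From mathcomp Require Import ring.
Import GRing.Theory.

Lemma count_take_sum (w : seq bool) m : m <= size w ->
  count id (take m w) = \sum_(j < m) (nth false w j : nat).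
Proof.
elim: m => [|m IH] Hm; first by rewrite take0 big_ord0.
rewrite (take_nth false Hm) -cats1 count_cat IH ?(ltnW Hm) // big_ord_recr /=.
by rewrite addn0.
Qed.

Lemma card_P (w : seq bool) (m : 'I_(size w)) :
  #|[set j : 'I_(size w) | (j < m) && nth false w j]| = count id (take m w).
Proof.
rewrite -sum1dep_card (@count_take_sum w m (ltnW (ltn_ord m))).
rewrite (big_ord_widen _ (fun j => (nth false w j : nat)) (ltnW (ltn_ord m))).
rewrite [RHS]big_mkcond [LHS]big_mkcond /=.
apply: eq_bigr => j _; by case: (j < m); case: (nth false w j).
Qed.


Definition clq (w : seq bool) (A : {set 'I_(size w)}) :=
  [forall x in A, forall y in A, (x != y) ==> @threshold_rel w x y].
Definition Qm (w : seq bool) (m : 'I_(size w)) (A : {set 'I_(size w)}) :=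
  (m \in A) && [forall x in A, x <= m].
Definition Pm (w : seq bool) (m : 'I_(size w)) :=
  [set j : 'I_(size w) | (j < m) && nth false w j].

Arguments Qm {w}.
Arguments Pm {w}.
Arguments clq {w}.

Lemma charC (w : seq bool) (m : 'I_(size w)) (A : {set 'I_(size w)}) : Qm m A -> clq A = (A :\ m \subset Pm m).
Proof.
move=> /andP [mA /forall_inP Hle]; apply/idP/idP.
  move=> /forall_inP Hc; apply/subsetP => x; rewrite !inE => /andP [xm xA].
  have := Hc x xA => /forall_inP /(_ m mA) /implyP /(_ xm).
  rewrite /threshold_rel xm /=.
  have xltm : x < m by rewrite ltn_neqAle (Hle x xA) andbT.
  by rewrite (minn_idPl (ltnW xltm)) xltm.
move=> /subsetP Hs; apply/forall_inP => x xA; apply/forall_inP => y yA.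
apply/implyP => xy; rewrite /threshold_rel xy /=.
have HP : forall z, z \in A -> z != m -> nth false w z.
  move=> z zA zm; have := Hs z; rewrite !inE zm zA /= => /(_ isT) /andP [] //.
case: (leqP x y) => hxy.
  apply: HP xA _.
  apply: contraNneq xy => Exm; apply/eqP/val_inj/eqP.
  rewrite eqn_leq hxy /= Exm; exact: Hle.
apply: HP yA _.
apply: contraNneq xy => Eym; apply/eqP/val_inj/eqP.
rewrite eqn_leq (ltnW hxy) andbT Eym; exact: Hle.
Qed.

Lemma clique_formula w k :
  clique_count (@threshold_rel w) k.+1 = \sum_(m < size w) 'C(count id (take m w), k).
Proof.
rewrite /clique_count.
set S := [set A | _].
have HS : forall A, (A \in S) = (#|A| == k.+1) && clq A by move=> A; rewrite inE.
have H1 : #|S| = \sum_(m < size w) #|[set A in S | Qm m A]|.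
  rewrite -sum1_card.
  transitivity (\sum_(A in S) \sum_(m < size w) (Qm m A : nat)).
    apply: eq_bigr => A; rewrite HS => /andP [/eqP cA _].
    have : (0 < #|A|) by rewrite cA.
    rewrite card_gt0 => /set0Pn [x xA].
    case: (@arg_maxnP _ x (fun i => i \in A) (fun i => val i) xA) => m0 m0A Hmax.
    rewrite (bigD1 m0) //= big1.
      by rewrite /Qm m0A /=; have -> : [forall x0 in A, x0 <= m0] by apply/forall_inP.
    move=> m Hm; rewrite /Qm; case: (boolP (m \in A)) => //= mA.
    case: (boolP [forall x in A, x <= m]) => //= /forall_inP Hle.
    exfalso; move: Hm => /negP; apply; apply/eqP/val_inj/eqP.
    by rewrite eqn_leq (Hle m0 m0A) andbT; apply: Hmax.
  rewrite exchange_big; apply: eq_bigr => m _.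
  rewrite -sum1dep_card big_mkcondr; apply: eq_bigr => A _; by case: (Qm m A).
rewrite H1; apply: eq_bigr => m _.
have H2 : [set A in S | Qm m A] = (fun B : {set 'I_(size w)} => m |: B) @: [set B : {set 'I_(size w)} | B \subset Pm m & #|B| == k].
  have mP : m \notin Pm m by rewrite inE ltnn.
  apply/setP => A; rewrite [in LHS]inE HS; apply/andP/imsetP.
    move=> [/andP [/eqP cA cl] QA]; exists (A :\ m); last first.
      by rewrite setD1K //; case/andP: QA.
    rewrite inE -(@charC w m A QA) cl /=.
    move: cA; rewrite (cardsD1 m A); case/andP: QA => -> _; by rewrite add1n => -[->].
  move=> [B]; rewrite inE => /andP [sB /eqP cB] ->.
  have mB : m \notin B by apply: contra mP; apply: (subsetP sB).
  have QB : Qm m (m |: B).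
    rewrite /Qm setU11 /=; apply/forall_inP => x; rewrite in_setU1 => /orP [/eqP -> //|xB].
    by have := subsetP sB x xB; rewrite inE => /andP [/ltnW].
  split => //; by rewrite cardsU1 mB cB /= (@charC w m (m |: B) QB) setU1K // add1n eqxx sB.
rewrite H2 card_in_imset.
  by rewrite cards_draws card_P.
move=> B1 B2; rewrite !inE => /andP [s1 _] /andP [s2 _] E.
have mP : m \notin Pm m by rewrite inE ltnn.
have m1 : m \notin B1 by apply: contra mP; apply: (subsetP s1).
have m2 : m \notin B2 by apply: contra mP; apply: (subsetP s2).
by rewrite -(setU1K m1) E setU1K.
Qed.

Local Open Scope ring_scope.

Definition G (Y : {poly int}) (w : seq bool) : {poly int} :=
  \sum_(m < size w) Y ^+ count id (take m w).

Lemma G_cons Y b w : G Y (b :: w) = 1 + (if b then Y else 1) * G Y w.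
Proof.
rewrite /G /= big_ord_recl /= expr0; congr (_ + _).
rewrite mulr_sumr; apply: eq_bigr => i _.
rewrite /bump /= exprD; by case: b; rewrite ?expr1 ?expr0.
Qed.

Lemma G_nil Y : G Y [::] = 0.
Proof. by rewrite /G big_ord0. Qed.

Lemma lhs_gen (Y : {poly int}) (w : seq bool) (acc : nat) :
  last false w = true ->
  \sum_(i < nS w) ((nth 0%N (bvec_aux acc w) i)%:R * Y ^+ i) = acc%:R + G Y w.
Proof.
elim: w acc => [|b w IH] acc //.
case: w IH => [|c w] IH.
  move=> /= Hb; subst b; rewrite /nS /= big_ord1 /= expr0 mulr1 G_cons G_nil mulr0 addr0.
  by rewrite -natr1.
move=> Hl; have Hl' : last false (c :: w) = true by [].
clear Hl; move: (c :: w) Hl' IH => l Hl' IH.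
case: b; rewrite G_cons.
  rewrite (_ : nS (true :: l) = (nS l).+1) // (_ : bvec_aux acc (true :: l) = acc.+1 :: bvec_aux 0 l) //.
  rewrite big_ord_recl /= expr0 mulr1.
  have -> : \sum_(i < nS l) (nth 0%N (acc.+1 :: bvec_aux 0 l) (bump 0 i))%:R * Y ^+ bump 0 i
     = (\sum_(i < nS l) (nth 0%N (bvec_aux 0 l) i)%:R * Y ^+ i) * Y.
    rewrite mulr_suml; apply: eq_bigr => i _; by rewrite /bump /= exprSr mulrA.
  rewrite (IH 0%N Hl') -natr1 /=; ring.
rewrite (_ : nS (false :: l) = nS l) // (_ : bvec_aux acc (false :: l) = bvec_aux acc.+1 l) //.
rewrite (IH acc.+1 Hl') -natr1 mul1r; ring.
Qed.

Lemma binom_trunc (N s : nat) : (s < N)%N ->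
  \sum_(k < N) ('C(s, k))%:R * 'X ^+ k = ('X + 1) ^+ s :> {poly int}.
Proof.
move=> H; rewrite exprD1n (big_ord_widen _ (fun k => 'X ^+ k *+ 'C(s, k)) H) [RHS]big_mkcond.
apply: eq_bigr => k _; case: ltnP => h; first by rewrite mulr_natl.
by rewrite bin_small // mul0r.
Qed.

Lemma s_lt (w : seq bool) (m : 'I_(size w)) : last false w = true ->
  (count id (take m w) < nS w)%N.
Proof.
move=> Hw; rewrite /nS -[X in (_ < count id X)%N](cat_take_drop m w) count_cat -{1}[count id (take m w)]addn0 ltn_add2l.
rewrite -has_count; apply/hasP; exists true => //.
have Hm := ltn_ord m.
have <- : nth false (drop m w) ((size w).-1 - m) = true.
  by rewrite nth_drop subnKC ?nth_last // -ltnS prednK // (leq_ltn_trans _ Hm).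
apply: mem_nth; rewrite size_drop; by rewrite ltn_sub2r // prednK // ?(leq_ltn_trans _ Hm).
Qed.

Theorem proposition2p2 (w : seq bool) (Hw : last false w = true) :
  \sum_(i < nS w) ((nth 0%N (bvec w) i)%:R * ('X + 1) ^+ i)
  = \sum_(i < nS w) ((@clique_count _ (@threshold_rel w) i.+1)%:R * 'X ^+ i)
  :> {poly int}.
Proof.
rewrite /bvec (@lhs_gen _ w 0%N Hw) add0r /G.
symmetry; under eq_bigr => i _ do rewrite (clique_formula w i) natr_sum mulr_suml.
rewrite exchange_big; apply: eq_bigr => m _.
by rewrite binom_trunc // s_lt.
Qed.
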